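(* For all integers $N>r\ge 0$, the $N\times N$ discrete Fourier transform matrix $F_N$ satisfies $(r+1)\cdot\big(r+\mathcal{R}_{F_N}(r)/N\big)\ge N$, where rigidity is over $\mathbb{C}$.
   Context: $F_N\in\mathbb{C}^{N\times N}$ has entries $F_N[i,j]=\omega_N^{ij}$ for $i,j\in\{0,\dots,N-1\}$, with $\omega_N=e^{2\pi i/N}$. $\mathcal{R}_A(r)=\min\{\mathrm{nnz}(B):\mathrm{rank}(A+B)\le r\}$ is the rank-$r$ rigidity. *)

(* Defs.v *)
From HB Require Import structures.
From mathcomp Require Import all_boot all_order all_algebra.
From mathcomp Require Import boolp reals trigo.
From mathcomp Require Import complex.
Set Implicit Arguments. Unset Strict Implicit. Unset Printing Implicit Defensive.
Import Order.TTheory GRing.Theory Num.Theory.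
Local Open Scope ring_scope.
Local Open Scope complex_scope.

Definition nnz (K : nmodType) (m n : nat) (B : 'M[K]_(m, n)) : nat :=
  #|[set ij : 'I_m * 'I_n | B ij.1 ij.2 != 0]|.

(* rank-r rigidity: R_A(r) = min { nnz B : rank (A + B) <= r }
   (the predicate is made boolean with the classical `[< _ >] of boolp) *)
Definition rigidity_pred (K : fieldType) (m n : nat) (A : 'M[K]_(m, n)) (r : nat) : pred nat :=
  fun k => `[< exists B : 'M[K]_(m, n), (\rank (A + B)%R <= r)%N /\ nnz B = k >].

Lemma rigidity_ex (K : fieldType) (m n : nat) (A : 'M[K]_(m, n)) (r : nat) :
  exists k : nat, rigidity_pred A r k.
Proof.
exists (nnz (- A)); apply/asboolP; exists (- A); split=> //.
by rewrite (_ : (A + - A)%R = 0) ?mxrank0 //; apply/matrixP=> i j; rewrite !mxE subrr.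
Qed.

Definition rigidity (K : fieldType) (m n : nat) (A : 'M[K]_(m, n)) (r : nat) : nat :=
  ex_minn (rigidity_ex A r).

(* omega_N = e^{2 pi i / N} = cos(2 pi / N) + i sin(2 pi / N) in C = R[i] *)
Definition omegaN (R : realType) (N : nat) : R[i] :=
  (cos (2 * pi / N%:R)) +i* (sin (2 * pi / N%:R)).

Definition DFT (R : realType) (N : nat) : 'M[R[i]]_N :=
  \matrix_(i < N, j < N) omegaN R N ^+ (i * j).

(* Main.v *)
Require Import Defs.
From HB Require Import structures.
From mathcomp Require Import all_boot all_order all_algebra.
From mathcomp Require Import reals trigo complex.
From mathcomp Require Import ring lra zify boolp.
Import Order.TTheory GRing.Theory Num.Theory.
Local Open Scope ring_scope.

Section Om.
Variable R : realType.

Lemma cmulE (a b c d : R) : (Complex a b) * (Complex c d) = Complex (a * c - b * d) (a * d + b * c).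
Proof. by []. Qed.

Lemma omega_pow (N k : nat) :
  omegaN R N ^+ k = Complex (cos (k%:R * (2 * pi / N%:R))) (sin (k%:R * (2 * pi / N%:R))).
Proof.
set t := 2 * pi / N%:R.
elim: k => [|k IH]; first by rewrite expr0 !mul0r cos0 sin0.
rewrite exprS IH mulrC /omegaN -/t cmulE -natr1 mulrDl mul1r cosD sinD.
congr (Complex _ _); lra.
Qed.

Lemma omega_neq0 N : omegaN R N != 0.
Proof.
apply/eqP; rewrite /omegaN => [[c s]].
have c' : cos (2 * pi / N%:R) = 0 :> R := c.
have s' : sin (2 * pi / N%:R) = 0 :> R := s.
by have := @cos2Dsin2 R (2 * pi / N%:R); rewrite c' s' expr0n /= addr0 => /eqP; rewrite eq_sym oner_eq0.
Qed.

Lemma omega_neq1 N k : (0 < k)%N -> (k < N)%N -> omegaN R N ^+ k != 1.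
Proof.
move=> k0 kN; rewrite omega_pow; apply/eqP => [[c s]].
set x := k%:R * (2 * pi / N%:R) in c s.
have {}c : cos x = 1 :> R := c.
have {}s : sin x = 0 :> R := s.
have N0 : (0 : R) < N%:R by rewrite ltr0n (leq_trans k0 (ltnW kN)).
have hx0 : 0 < x by rewrite /x mulr_gt0 ?ltr0n ?divr_gt0 ?mulr_gt0 ?pi_gt0.
have pi0 : (0:R) < pi := @pi_gt0 R.
have hy : k%:R / N%:R < 1 :> R by rewrite ltr_pdivrMr // mul1r ltr_nat.
have hy0 : 0 < k%:R / N%:R :> R by rewrite divr_gt0 // ltr0n.
have xE : x = (k%:R / N%:R) * (2 * pi) by rewrite /x mulrA mulrAC.
have hx2 : x < pi *+ 2 by rewrite xE mulr2n; nra.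
case: (ltrgtP x pi) => hp.
- by have := @sin_gt0_pi R x; rewrite hx0 hp s ltxx => /(_ isT).
- have := @sin_gt0_pi R (x - pi); rewrite subr_gt0 hp /=.
  have -> : sin (x - pi) = - sin x by rewrite -[in RHS](subrK pi x) (@sinDpi R) opprK.
  rewrite s oppr0 ltxx => H; have : x - pi < pi by rewrite mulr2n in hx2; lra.
  by move/H.
- by move: c; rewrite hp (@cospi R) => /eqP; rewrite eq_sym -addr_eq0 (_ : 1 + 1 = 2 :> R) // pnatr_eq0.
Qed.

Lemma omega_inj N a b : (a < N)%N -> (b < N)%N -> omegaN R N ^+ a = omegaN R N ^+ b -> a = b.
Proof.
wlog ab : a b / (a <= b)%N => [H aN bN E|aN bN E].
  case: (leqP a b) => h; first exact: H.
  by symmetry; apply: H => //; apply: ltnW.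
apply/eqP; rewrite eqn_leq ab /=; rewrite leqNgt; apply/negP => lt.
move: E; rewrite -(subnKC ab) exprD -{1}[omegaN R N ^+ a]mulr1 => /mulfI.
rewrite expf_neq0 ?omega_neq0 // => /(_ isT) E.
have := @omega_neq1 N (b - a); rewrite subn_gt0 lt -E eqxx.
by move/(_ isT (leq_ltn_trans (leq_subr _ _) bN)).
Qed.
End Om.

Lemma mxrank_mxsub (F : fieldType) m n m' n' (f : 'I_m' -> 'I_m) (g : 'I_n' -> 'I_n)
  (A : 'M[F]_(m, n)) : (\rank (mxsub f g A) <= \rank A)%N.
Proof.
have -> : mxsub f g A = rowsub f 1%:M *m (A *m colsub g 1%:M).
  by rewrite mulmx_colsub mulmx1 -mxsub_mul mul1mx.
exact: leq_trans (mxrankM_maxr _ _) (mxrankM_maxl _ _).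
Qed.

Lemma my_card_sum (T : finType) (A : {set T}) : #|A| = (\sum_x (x \in A : nat))%N.
Proof. by rewrite -sum1_card big_mkcond; apply: eq_bigr => x _; case: (x \in A). Qed.

Lemma block_bound (R : realType) N r (i0 : nat) (f : 'I_r.+1 -> 'I_N)
  (hf : forall k, val (f k) = (i0 + k)%N) (B : 'M[R[i]]_N)
  (hB : (\rank (DFT R N + B)%R <= r)%N) :
  (N - r <= \sum_(k < r.+1) #|[set j : 'I_N | B (f k) j != 0%R]|)%N.
Proof.
set U := [set j : 'I_N | [exists k, B (f k) j != 0%R]].
have U_le : (#|U| <= \sum_(k < r.+1) #|[set j : 'I_N | B (f k) j != 0%R]|)%N.
  rewrite my_card_sum (eq_bigr _ (fun k _ => @my_card_sum _ [set j : 'I_N | B (f k) j != 0%R])) exchange_big /= leq_sum // => j _.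
  rewrite inE; case: existsP => [[k0 hk0]|] //.
  by rewrite (bigD1 k0) //= inE hk0 leq_addr.
apply: leq_trans U_le.
have cU := cardsC U; rewrite card_ord in cU.
suff hJ : (#|~: U| <= r)%N by move: hJ cU; clear; lia.
rewrite leqNgt; apply/negP => hJ.
pose g (l : 'I_r.+1) : 'I_N := enum_val (widen_ord hJ l).
have gJ l k : B (f k) (g l) = 0.
  have := enum_valP (widen_ord hJ l); rewrite -/(g l) !inE negb_exists.
  by move=> /forallP /(_ k); rewrite negbK => /eqP.
have g_inj : injective g.
  by move=> l1 l2 /enum_val_inj /(congr1 val) /= /val_inj.
pose a : 'rV[R[i]]_r.+1 := \row_l (omegaN R N ^+ g l).
pose d : 'rV[R[i]]_r.+1 := \row_l (omegaN R N ^+ (i0 * g l)).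
have SE : mxsub f g (DFT R N + B) = Vandermonde r.+1 a *m diag_mx d.
  apply/matrixP => k l; rewrite mul_mx_diag !mxE gJ addr0 hf.
  by rewrite mulnDl exprD mulrC mulnC exprM.
have := @mxrank_mxsub _ _ _ _ _ f g (DFT R N + B); rewrite SE mxrank_unit.
  by move=> h; have := leq_trans h hB; rewrite ltnn.
rewrite unitmxE det_mulmx det_diag det_Vandermonde unitfE mulf_neq0 //.
  apply/prodf_neq0 => i _; apply/prodf_neq0 => j ij.
  rewrite !mxE subr_eq0; apply/eqP => /omega_inj.
  move=> /(_ (ltn_ord _) (ltn_ord _)) /val_inj /g_inj ji.
  by move: ij; rewrite ji ltnn.
by apply/prodf_neq0 => i _; rewrite mxE expf_neq0 // omega_neq0.
Qed.

Lemma sum_blocks (c : nat -> nat) q k :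
  (\sum_(0 <= n < q * k) c n = \sum_(t < q) \sum_(j < k) c (t * k + j))%N.
Proof.
elim: q => [|q IH]; first by rewrite mul0n big_geq // big_ord0.
rewrite big_ord_recr /= -IH mulSn addnC (big_cat_nat _ (n:=q * k)) //= ?leq_addr //.
congr (_ + _)%N; rewrite -{1}[(q * k)%N]add0n big_addn addKn big_mkord.
by apply: eq_bigr => j _; rewrite addnC.
Qed.

Lemma lower_bound (R : realType) N r (hrN : (r < N)%N) (B : 'M[R[i]]_N)
  (hB : (\rank (DFT R N + B)%R <= r)%N) :
  (N %/ r.+1 * (N - r) <= nnz B)%N.
Proof.
have N0 : (0 < N)%N by apply: leq_ltn_trans hrN.
pose o : 'I_N := Ordinal N0.
pose cn (n : nat) := #|[set j : 'I_N | B (insubd o n) j != 0%R]|.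
pose S := [set ij : 'I_N * 'I_N | B ij.1 ij.2 != 0%R].
have nnzE : nnz B = (\sum_(0 <= n < N) cn n)%N.
  rewrite /nnz -/S (@my_card_sum _ S) big_mkord.
  rewrite (eq_bigr (fun i : 'I_N => \sum_(j < N) (((i, j) \in S) : nat))); last first.
    by move=> i _; rewrite /cn valKd my_card_sum; apply: eq_bigr => j _; rewrite !inE.
  by rewrite pair_bigA; apply: eq_bigr => -[i j] _.
set q := (N %/ r.+1)%N.
have qN : (q * r.+1 <= N)%N by rewrite /q leq_trunc_div.
rewrite nnzE (big_cat_nat _ (n := (q * r.+1)%N)) //= sum_blocks.
apply: leq_trans (leq_addr _ _).
rewrite -[X in (X * _ <= _)%N]card_ord -sum_nat_const leq_sum // => t _.
have hf (k : 'I_r.+1) : (t * r.+1 + k < N)%N.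
  have := ltn_ord t; have := ltn_ord k; move: qN; clear; nia.
pose f (k : 'I_r.+1) : 'I_N := Ordinal (hf k).
have := @block_bound R N r (t * r.+1) f (fun k => erefl) B hB.
congr (_ <= _)%N; apply: eq_bigr => k _; rewrite /cn.
have -> : insubd o (t * r.+1 + k)%N = f k by apply/val_inj; rewrite val_insubd hf.
by [].
Qed.

Theorem mainTheorem10 (R : realType) (N r : nat) (hrN : (r < N)%N) :
  (N%:R : R) <= (r.+1)%:R * (r%:R + (rigidity (DFT R N) r)%:R / N%:R).
Proof.
rewrite /rigidity; case: ex_minnP => s /asboolP [B [hB <-]] _.
have hl := @lower_bound R N r hrN B hB.
set s' := nnz B in hl *.
have hq := divn_eq N r.+1.
have hm := ltn_pmod N (ltn0Sn r).
have key : (N * N <= r.+1 * (r * N + s'))%N.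
  set q := (N %/ r.+1)%N in hl hq; set m := (N %% r.+1)%N in hq hm.
  have h1 : (N - r <= q * r.+1)%N by move: hq hm; clear; lia.
  have h2 : ((N - r) * (N - r) <= r.+1 * s')%N.
    apply: leq_trans (leq_mul h1 (leqnn (N - r))) _.
    by rewrite mulnAC mulnC leq_mul2l hl orbT.
  have [d Nd] : exists d, N = (d + r)%N by exists (N - r)%N; rewrite subnK // ltnW.
  rewrite Nd addnK in h2.
  have h3 : (2 * r <= r * r.+1)%N by clear; case: r => // r'; nia.
  have h4 : (2 * r * d <= r * r.+1 * d)%N by rewrite leq_mul2r h3 orbT.
  move: h2 h4 Nd; clear; nia.
have N0 : (0 : R) < N%:R by rewrite ltr0n; apply: leq_ltn_trans hrN.
have -> : (r.+1)%:R * (r%:R + s'%:R / N%:R) = (r.+1 * (r * N + s'))%:R / N%:R :> R.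
  by rewrite natrM natrD natrM; field; rewrite lt0r_neq0.
by rewrite ler_pdivlMr // -natrM ler_nat.
Qed.
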